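(* If $A=(A_n)_{n=0}^\infty$ is an Appell sequence, then (a) the sequence $A^*=(A^*_n)_{n=0}^\infty$ defined by $A^*_n=A_{(1^n)}$ is also an Appell sequence; (b) the Wronskian Appell polynomials for $A$ and $A^*$ satisfy $A^*_\lambda=A_{\lambda'}$ for all partitions $\lambda$, where $\lambda'$ is the conjugate partition; (c) the exponential generating functions satisfy $f_{A^*}(t)=1/f_A(-t)$, or equivalently, $\log f_A(t)=\sum_{k=1}^\infty c_k\frac{t^k}{k!}$ implies $\log f_{A^*}(t)=\sum_{k=1}^\infty (-1)^{k-1}c_k\frac{t^k}{k!}$.
   Context: An Appell sequence is a sequence of polynomials $(A_n)_{n\ge0}$ with $A_0=1$ and $A_n'=nA_{n-1}$ for $n\ge1$; it satisfies $\sum_k A_k(x)t^k/k!=e^{xt}f_A(t)$ for a formal power series $f_A$ with $f_A(0)=1$. For a partition $\lambda$ of length $r$, let $(n_1,\dots,n_r)=(\lambda_r,\lambda_{r-1}+1,\dots,\lambda_1+r-1)$ and $A_\lambda=\operatorname{Wr}[A_{n_1},\dots,A_{n_r}]/\Delta(n_1,\dots,n_r)$, where $\operatorname{Wr}$ is the Wronskian and $\Delta$ the Vandermonde determinant $\prod_{i<j}(x_j-x_i)$. $(1^n)=(1,\dots,1)$ ($n$ ones). *)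

(* Defs.v *)
From HB Require Import structures.
From mathcomp Require Import all_boot all_order all_algebra.
Set Implicit Arguments. Unset Strict Implicit. Unset Printing Implicit Defensive.
Import Order.TTheory GRing.Theory Num.Theory.
Local Open Scope ring_scope.

Section Appell.
Variable R : fieldType.

Definition appell (A : nat -> {poly R}) : Prop :=
  A 0%N = 1 /\ forall n : nat, (A n.+1)^`() = (n.+1)%:R *: A n.

(* Formal power series in t, as coefficient sequences (coefficient of t^k). *)
Definition pseries := nat -> R.
Definition ps_one : pseries := fun n => (n == 0%N)%:R.
Definition ps_mul (f g : pseries) : pseries :=
  fun n => \sum_(k < n.+1) f k * g (n - k)%N.
Definition ps_neg_arg (f : pseries) : pseries := fun n => (-1) ^+ n * f n.

(* f is the series f_A with  sum_n A_n(x) t^n/n! = e^{xt} f(t), i.e. comparing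
   coefficients of t^n:  A_n(x)/n! = sum_{k<=n} f_k x^(n-k)/(n-k)!. *)
Definition is_appell_egf (A : nat -> {poly R}) (f : pseries) : Prop :=
  forall n : nat,
    A n = (n`!)%:R *: \sum_(k < n.+1) (f k / ((n - k)`!)%:R) *: 'X^(n - k).

Definition is_partition (l : seq nat) : bool :=
  sorted geq l && all (fun x => 0 < x)%N l.

Definition conj_part (l : seq nat) : seq nat :=
  mkseq (fun j => count (fun x => j < x)%N l) (head 0%N l).

Definition ones (n : nat) : seq nat := nseq n 1%N.

Definition wronskian (r : nat) (P : 'I_r -> {poly R}) : {poly R} :=
  \det (\matrix_(i < r, j < r) (P j)^`(i)).

(* n_j = lambda_{r+1-j} + j - 1 for j = 1..r (0-indexed below). *)
Definition wr_index (l : seq nat) (j : nat) : nat :=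
  (nth 0 l (size l - 1 - j) + j)%N.

Definition vandermonde (r : nat) (x : 'I_r -> R) : R :=
  \prod_(i < r) \prod_(j < r | (i < j)%N) (x j - x i).

Definition wr_appell (A : nat -> {poly R}) (l : seq nat) : {poly R} :=
  let r := size l in
  (vandermonde (fun j : 'I_r => (wr_index l j)%:R))^-1 *:
    wronskian (fun j : 'I_r => A (wr_index l j)).

End Appell.

(* Main.v *)
Require Import Defs.
From HB Require Import structures.
From mathcomp Require Import all_boot all_order all_algebra.
From mathcomp Require Import fingroup perm.
From mathcomp Require Import zify ring.
Import GRing.Theory.

Lemma geq_trans' : transitive geq.
Proof. by move=> a b c H1 H2; apply: leq_trans H2 H1. Qed.

Lemma sorted_cons_all x l : sorted geq (x :: l) -> all (fun y => y <= x) l && sorted geq l.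
Proof. by move=> /=; rewrite path_sortedE //; exact: geq_trans'. Qed.

Lemma nth_dec l i j : sorted geq l -> i <= j -> nth 0 l j <= nth 0 l i.
Proof.
elim: l i j => [|x l IH] i j /=; first by rewrite !nth_nil.
move=> /sorted_cons_all /andP[ax sl].
case: i => [|i]; case: j => [|j] //= hij.
  case: (ltnP j (size l)) => hj; first by apply: (allP ax); rewrite mem_nth.
  by rewrite nth_default.
by apply: IH.
Qed.

Lemma K1 l i k : sorted geq l -> k < nth 0 l i -> i < count (fun x => k < x) l.
Proof.
elim: l i => [|x l IH] i /=; first by rewrite nth_nil.
move=> /sorted_cons_all /andP[ax sl].
case: i => [|i] /= h; first by rewrite h.
have hx : k < x.
  apply: (leq_trans h); case: (ltnP i (size l)) => hi; first by apply: (allP ax); rewrite mem_nth.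
  by rewrite nth_default in h.
by rewrite hx add1n ltnS IH.
Qed.

Lemma K2 l i k : sorted geq l -> nth 0 l i <= k -> count (fun x => k < x) l <= i.
Proof.
elim: l i => [|x l IH] i /=; first by [].
move=> /sorted_cons_all /andP[ax sl].
case: i => [|i] /= h.
  have -> : (k < x) = false by rewrite ltnNge h.
  rewrite add0n.
  suff: ~~ has (fun x => k < x) l by rewrite has_count -leqNgt leqn0.
  apply/hasPn => y /(allP ax) /= hy. by rewrite -leqNgt (leq_trans hy h).
have := IH i sl h. case: (k < x) => /=; lia.
Qed.

Definition Fn (l : seq nat) (x : nat) : nat :=
  if x < size l then wr_index l x
  else size l + (size (conj_part l) - 1 - (x - size l))
       - nth 0 (conj_part l) (size (conj_part l) - 1 - (x - size l)).
Definition Gn (l : seq nat) (x : nat) : nat :=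
  if x < size l then x else size l + size (conj_part l) - 1 - (x - size l).

Section Comb.
Variable l : seq nat.
Hypothesis srt : sorted geq l.
Local Notation r := (size l).
Local Notation s := (size (conj_part l)).
Local Notation L i := (nth 0 l i).
Local Notation L' k := (nth 0 (conj_part l) k).

Lemma size_conj : s = head 0 l.
Proof. exact: size_mkseq. Qed.

Lemma nth_conj k : k < s -> L' k = count (fun x => k < x) l.
Proof. by rewrite size_conj => hk; rewrite nth_mkseq. Qed.

Lemma L_le_s i : L i <= s.
Proof. by rewrite size_conj -nth0; apply: nth_dec. Qed.

Lemma L'_le_r k : L' k <= r.
Proof.
case: (ltnP k s) => hk; first by rewrite nth_conj // count_size.
by rewrite nth_default.
Qed.

Lemma L'_dec k1 k2 : k1 <= k2 -> L' k2 <= L' k1.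
Proof.
move=> hk; case: (ltnP k2 s) => h2; last by rewrite (nth_default _ h2).
rewrite !nth_conj //; last by apply: leq_ltn_trans h2.
by apply: sub_count => x /=; apply: leq_ltn_trans.
Qed.

Lemma key i k : i < r -> k < s -> L i + (r - 1 - i) != r + k - L' k.
Proof.
move=> hi hk; have hr := L'_le_r k.
case: (ltnP k (L i)) => h.
  have := @K1 _ _ _ srt h; rewrite -nth_conj // => h1; lia.
have := @K2 _ _ _ srt h; rewrite -nth_conj // => h1; lia.
Qed.

Lemma wr_inc x y : x < y -> y < r -> wr_index l x < wr_index l y.
Proof.
move=> hxy hy; rewrite /wr_index.
have : L (r - 1 - y) >= L (r - 1 - x) by apply: nth_dec => //; lia.
lia.
Qed.

Lemma Fn_bound x : x < r + s -> Fn l x < r + s.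
Proof.
rewrite /Fn /wr_index; case: ifP => hx h.
  have := L_le_s (r - 1 - x); lia.
lia.
Qed.

Lemma Gn_bound x : x < r + s -> Gn l x < r + s.
Proof. rewrite /Gn; case: ifP => hx h; lia. Qed.

Lemma Gn_inj x y : x < r + s -> y < r + s -> Gn l x = Gn l y -> x = y.
Proof. rewrite /Gn; case: ifP => hx; case: ifP => hy; lia. Qed.

Lemma m_dec p1 p2 : p1 < p2 -> p2 < s ->
  r + (s - 1 - p2) - L' (s - 1 - p2) < r + (s - 1 - p1) - L' (s - 1 - p1).
Proof.
move=> h12 h2.
have := @L'_dec (s - 1 - p2) (s - 1 - p1) ltac:(lia). have := L'_le_r (s - 1 - p1). have := L'_le_r (s - 1 - p2). lia.
Qed.

Lemma Fn_inj x y : x < r + s -> y < r + s -> Fn l x = Fn l y -> x = y.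
Proof.
rewrite /Fn; case: ifP => hx; case: ifP => hy hxs hys.
- case: (ltngtP x y) => // h.
  + by have := @wr_inc x y h hy; lia.
  + by have := @wr_inc y x h hx; lia.
- move=> E; exfalso.
  have ltx : r - 1 - x < r by lia.
  have lty : s - 1 - (y - r) < s by lia.
  have /eqP := @key _ _ ltx lty; apply. rewrite /wr_index in E.
  have -> : r - 1 - (r - 1 - x) = x by lia. rewrite E. lia.
- move=> E; exfalso.
  have ltx : r - 1 - y < r by lia.
  have lty : s - 1 - (x - r) < s by lia.
  have /eqP := @key _ _ ltx lty; apply. rewrite /wr_index in E.
  have -> : r - 1 - (r - 1 - y) = y by lia. rewrite -E. lia.
- case: (ltngtP x y) => // h E; exfalso.
  + have := @m_dec (x - r) (y - r) ltac:(lia) ltac:(lia). lia.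
  + have := @m_dec (y - r) (x - r) ltac:(lia) ltac:(lia). lia.
Qed.

End Comb.

Set Implicit Arguments. Unset Strict Implicit. Unset Printing Implicit Defensive.
Local Open Scope ring_scope.

Definition JTmx (T : pzRingType) (l : seq nat) (h : nat -> T) : 'M[T]_(size l) :=
  \matrix_(i < size l, j < size l)
    if (i <= wr_index l j)%N then h (wr_index l j - i)%N else 0.
Definition JT (T : pzRingType) (l : seq nat) (h : nat -> T) : T := \det (JTmx l h).

Definition relhe (T : pzRingType) (h e : nat -> T) := forall n : nat,
  \sum_(i < n.+1) h i * ((-1) ^+ (n - i) * e (n - i)%N) = (n == 0%N)%:R.

Lemma jacobi (T : comPzRingType) p q (A B : 'M[T]_(p + q)) :
  A *m B = 1%:M -> \det (ulsubmx A) = \det A * \det (drsubmx B).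
Proof.
move=> AB.
have E : A *m block_mx 1%:M (ursubmx B) 0 (drsubmx B)
         = block_mx (ulsubmx A) 0 (dlsubmx A) 1%:M.
  rewrite -{1}[A]submxK mulmx_block !mulmx1 !mulmx0 !addr0.
  move: AB; rewrite -{1}[A]submxK -{1}[B]submxK mulmx_block (scalar_mx_block p q 1).
  by case/eq_block_mx => _ -> _ ->.
have := congr1 determinant E.
by rewrite det_mulmx det_ublock det_lblock !det1 mul1r mulr1 => <-.
Qed.

Lemma signB (T : pzRingType) a b : (a <= b)%N ->
  (-1) ^+ (b - a) = (-1) ^+ a * (-1) ^+ b :> T.
Proof.
by move=> h; rewrite -exprD -signr_odd -[RHS]signr_odd oddB // oddD addbC.
Qed.

Lemma prod_sign (T : pzRingType) n (f : 'I_n -> nat) :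
  \prod_(i < n) (-1) ^+ f i = (-1) ^+ (\sum_(i < n) f i)%N :> T.
Proof.
symmetry; apply: (big_morph (fun k : nat => (-1) ^+ k : T)); [exact: exprD | exact: expr0].
Qed.

Lemma AB1 (T : comPzRingType) N (h e : nat -> T) : relhe h e ->
  (\matrix_(a < N, b < N) if (a <= b)%N then h (b - a)%N else 0) *m
  (\matrix_(a < N, b < N) if (a <= b)%N then (-1) ^+ (b - a) * e (b - a)%N else 0)
  = 1%:M.
Proof.
move=> rel; apply/matrixP => a c; rewrite !mxE.
under eq_bigr do rewrite !mxE.
case: (leqP a c) => hac.
- transitivity (\sum_(0 <= b < N) (if (a <= b)%N then h (b - a)%N else 0) *
     (if (b <= c)%N then (-1) ^+ (c - b) * e (c - b)%N else 0)).
    by rewrite big_mkord.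
  have aN : (a < N)%N := ltn_ord a.
  have cN : (c < N)%N := ltn_ord c.
  rewrite (big_cat_nat (n := a)) //=; last by lia.
  rewrite (big_cat_nat (n := c.+1) (m := a)) //=; last by lia.
  rewrite big_nat_cond big1 ?add0r; last first.
    by move=> b /andP[/andP[_ hb] _]; rewrite leqNgt hb mul0r.
  rewrite [X in _ + X]big_nat_cond [X in _ + X]big1 ?addr0; last first.
    by move=> b /andP[/andP[hb _] _]; rewrite [(b <= c)%N]leqNgt hb mulr0.
  rewrite -[X in \sum_(X <= _ < _) _]add0n big_addn big_mkord.
  have -> : (c.+1 - a = (c - a).+1)%N by lia.
  rewrite (eq_bigr (fun i : 'I_(c - a).+1 =>
       h i * ((-1) ^+ (c - a - i) * e (c - a - i)%N))); last first.
    move=> i _; have hi := ltn_ord i.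
    rewrite leq_addl addnK (_ : (i + a <= c)%N); last by lia.
    by rewrite (_ : (c - (i + a) = c - a - i)%N) //; lia.
  rewrite rel.
  have -> : ((c - a)%N == 0%N) = (a == c).
    apply/eqP/eqP => [h'|->]; last by rewrite subnn.
    by apply: val_inj => /=; lia.
  by [].
- rewrite big1; last first.
    move=> b _; case: (leqP a b) => hab; last by rewrite mul0r.
    by rewrite ifN ?mulr0 // -ltnNge; lia.
  by rewrite (_ : (a == c) = false) //; apply/negbTE; rewrite neq_ltn hac orbT.
Qed.

Lemma DJT l : sorted geq l -> exists k : nat,
  forall (T : comPzRingType) (h e : nat -> T), h 0%N = 1 -> relhe h e ->
    JT l h = (-1) ^+ k * JT (conj_part l) e.
Proof.
move=> srt.
pose N := (size l + size (conj_part l))%N.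
have finj : injective (fun x : 'I_N => Ordinal (@Fn_bound l srt x (ltn_ord x))).
  move=> x y /(congr1 val) /= E; apply: val_inj.
  exact: (@Fn_inj l srt x y (ltn_ord x) (ltn_ord y) E).
have ginj : injective (fun x : 'I_N => Ordinal (@Gn_bound l srt x (ltn_ord x))).
  move=> x y /(congr1 val) /= E; apply: val_inj.
  exact: (@Gn_inj l srt x y (ltn_ord x) (ltn_ord y) E).
pose sg := perm finj. pose tu := perm ginj.
exists (odd_perm tu + odd_perm sg^-1
        + \sum_(p < size (conj_part l)) Fn l (size l + p)
        + \sum_(q < size (conj_part l)) Gn l (size l + q))%N.
move=> T h e h0 rel.
pose Aup : 'M[T]_N := \matrix_(a < N, b < N) if (a <= b)%N then h (b - a)%N else 0.
pose Bup : 'M[T]_N := \matrix_(a < N, b < N)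
   if (a <= b)%N then (-1) ^+ (b - a) * e (b - a)%N else 0.
have AB0 : Aup *m Bup = 1%:M := AB1 N rel.
pose A' := \matrix_(a, b) Aup (tu a) (sg b).
pose B' := \matrix_(a, b) Bup (sg a) (tu b).
have AB : A' *m B' = 1%:M.
  apply/matrixP => a c.
  transitivity ((Aup *m Bup) (tu a) (tu c)).
    rewrite !mxE [RHS](reindex_inj (@perm_inj _ sg)); apply: eq_bigr => b _.
    by rewrite /A' /B' !mxE.
  by rewrite AB0 !mxE (inj_eq perm_inj).
have detA : \det A' = (-1) ^+ tu * (-1) ^+ (sg^-1)%g.
  have -> : A' = row_perm tu (col_perm sg Aup) by apply/matrixP => a b; rewrite !mxE.
  rewrite row_permE col_permE !det_mulmx !det_perm.
  have -> : \det Aup = 1.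
    rewrite -det_tr det_trig; last first.
      apply/is_trig_mxP => i j hij; rewrite !mxE.
      by rewrite leqNgt hij.
    by rewrite big1 // => i _; rewrite !mxE leqnn subnn h0.
  by rewrite mul1r.
have ul : ulsubmx A' = JTmx l h.
  apply/matrixP => i j; rewrite !mxE !permE /= /Gn /Fn /=.
  by rewrite (ltn_ord i) (ltn_ord j).
have dr : drsubmx B' = diag_mx (\row_p (-1) ^+ Fn l (size l + p)) *m
          (JTmx (conj_part l) e)^T *m diag_mx (\row_q (-1) ^+ Gn l (size l + q)).
  apply/matrixP => p q; rewrite mul_mx_diag mul_diag_mx !mxE !permE /=.
  have hp : (p < (size (conj_part l)))%N := ltn_ord p. have hq : (q < (size (conj_part l)))%N := ltn_ord q.
  have hF : Fn l (size l + p) = (size l + ((size (conj_part l)) - 1 - p) - nth 0 (conj_part l) ((size (conj_part l)) - 1 - p))%N.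
    by rewrite /Fn ltnNge leq_addr /= addKn.
  have hG : Gn l (size l + q) = (size l + (size (conj_part l)) - 1 - q)%N.
    by rewrite /Gn ltnNge leq_addr /= addKn.
  have c_le := @L'_le_r l ((size (conj_part l)) - 1 - p).
  have Ecmp : (Fn l (size l + p) <= Gn l (size l + q))%N = (q <= wr_index (conj_part l) p)%N.
    rewrite hF hG /wr_index; apply/idP/idP => H; lia.
  rewrite Ecmp; case: ifP => hq'; last by rewrite mulr0 mul0r.
  rewrite (signB _ (_ : Fn l (size l + p) <= Gn l (size l + q))%N); last by rewrite Ecmp.
  have -> : (Gn l (size l + q) - Fn l (size l + p) = wr_index (conj_part l) p - q)%N.
    move: hq'; rewrite hF hG /wr_index; lia.
  by rewrite -!mulrA; congr (_ * _); rewrite mulrC.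
rewrite /JT -ul (jacobi AB) detA dr !det_mulmx !det_diag det_tr.
under eq_bigr do rewrite mxE.
under [X in _ * _ * X]eq_bigr do rewrite mxE.
rewrite !prod_sign.
by rewrite !exprD -!mulrA [_ * \det _]mulrC.
Qed.

Fixpoint es (T : pzRingType) (h : nat -> T) (n : nat) : seq T :=
  if n is n'.+1 then
    rcons (es h n') (- (-1) ^+ n'.+1 * \sum_(i < n'.+1)
                      h i.+1 * ((-1) ^+ (n' - i) * nth 0 (es h n') (n' - i)))
  else [:: 1].
Definition einv (T : pzRingType) (h : nat -> T) (n : nat) : T := nth 0 (es h n) n.

Lemma size_es (T : pzRingType) (h : nat -> T) n : size (es h n) = n.+1.
Proof. by elim: n => //= n IH; rewrite size_rcons IH. Qed.

Lemma nth_es (T : pzRingType) (h : nat -> T) n k : (k <= n)%N -> nth 0 (es h n) k = einv h k.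
Proof.
elim: n => [|n IH] hk; first by move: hk; rewrite leqn0 => /eqP ->.
rewrite leq_eqVlt in hk; case/orP: hk => [/eqP -> // | hk].
by rewrite /= nth_rcons size_es hk IH.
Qed.

Lemma einvS (T : pzRingType) (h : nat -> T) n : einv h n.+1 =
  - (-1) ^+ n.+1 * \sum_(i < n.+1) h i.+1 * ((-1) ^+ (n - i) * einv h (n - i)).
Proof.
rewrite /einv /= nth_rcons size_es ltnn eqxx; congr (_ * _).
by apply: eq_bigr => i _; rewrite nth_es // leq_subr.
Qed.

Lemma einv0 (T : pzRingType) (h : nat -> T) : einv h 0 = 1.
Proof. by []. Qed.

Lemma sign_sq (T : pzRingType) m : (-1) ^+ m * (-1) ^+ m = 1 :> T.
Proof. by rewrite -exprD -signr_odd oddD addbb. Qed.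

Lemma einv_rel (T : pzRingType) (h : nat -> T) : h 0%N = 1 -> relhe h (einv h).
Proof.
move=> h0 [|n]; first by rewrite big_ord1 h0 mul1r expr0 mul1r.
rewrite big_ord_recl h0 mul1r subn0 einvS.
rewrite (eq_bigr (fun i : 'I_n.+1 => h i.+1 * ((-1) ^+ (n - i) * einv h (n - i)))); last first.
  by [].
by rewrite mulNr mulrN mulrA sign_sq mul1r addNr.
Qed.

Lemma rel_sym (T : comPzRingType) (h e : nat -> T) : relhe h e -> relhe e h.
Proof.
move=> rel n.
have := rel n; rewrite (reindex_inj rev_ord_inj) /= => E.
rewrite (eq_bigr (fun i : 'I_n.+1 => (-1) ^+ n * (h (n - i)%N * ((-1) ^+ i * e i)))); last first.
  move=> i _; have hi : (i <= n)%N by rewrite -ltnS.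
  rewrite (signB _ hi).
  ring.
rewrite -mulr_sumr.
have -> : \sum_(i < n.+1) h (n - i)%N * ((-1) ^+ i * e i) = (n == 0%N)%:R.
  rewrite -E; apply: eq_bigr => i _; rewrite subSS subKn //; by rewrite -ltnS.
by case: n {E} => [|n]; rewrite ?expr0 ?mul1r ?mulr0.
Qed.

Lemma rel_h0 (R : fieldType) : [pchar R] =i pred0 ->
  relhe (fun k => (k`!%:R : R)^-1) (fun k => (k`!%:R : R)^-1).
Proof.
move=> ch n.
have nz : forall m, (m`!%:R : R) != 0.
  by move=> m; rewrite ((pcharf0P R).1 ch) -lt0n fact_gt0.
apply: (mulIf (nz n)).
rewrite mulr_suml.
rewrite (eq_bigr (fun i : 'I_n.+1 => (-1) ^+ (n - i) * 'C(n, i)%:R)); last first.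
  move=> i _; have hi : (i <= n)%N by rewrite -ltnS.
  rewrite -(bin_fact hi) !natrM.
  field. by rewrite !nz.
have E := exprDn (-1 : R) 1 n; rewrite addNr expr0n in E.
have -> : (n == 0%N)%:R * n`!%:R = (n == 0%N)%:R :> R by case: n {E} => [|n]; rewrite ?mul1r ?mul0r.
rewrite E; apply: eq_bigr => i _; by rewrite expr1n mulr1 mulr_natr.
Qed.

Lemma deriv_sign (R : fieldType) k (p : {poly R}) : ((-1) ^+ k * p)^`() = (-1) ^+ k * p^`().
Proof. by rewrite -signr_odd !mulr_sign; case: (odd k) => //; exact: derivN. Qed.

Lemma deriv_e (R : fieldType) (h e : nat -> {poly R}) : h 0%N = 1 ->
  (forall n, (h n.+1)^`() = h n) -> relhe e h -> e 0%N = 1 ->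
  forall n, (e n.+1)^`() = e n.
Proof.
move=> h0 hd rel e0.
have hd2 : forall n i, (i <= n)%N -> (h (n.+1 - i)%N)^`() = h (n - i)%N.
  by move=> n i hi; rewrite subSn // hd.
suff: forall n m, (m <= n)%N -> (e m)^`() = if m is m'.+1 then e m' else 0.
  by move=> H n; apply: (H n.+1).
elim=> [|n IH] m hm.
  by move: hm; rewrite leqn0 => /eqP ->; rewrite e0 -polyC1 derivC.
rewrite leq_eqVlt in hm; case/orP: hm => [/eqP -> | hm]; last exact: IH.
have E1 := rel n.+1.
rewrite big_ord_recr /= subnn expr0 mul1r h0 mulr1 in E1.
have -> : e n.+1 = - \sum_(i < n.+1) e i * ((-1) ^+ (n.+1 - i) * h (n.+1 - i)%N).
  by apply/eqP; rewrite -addr_eq0 addrC; apply/eqP; exact: E1.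
rewrite derivN raddf_sum.
rewrite (eq_bigr (fun i : 'I_n.+1 => (e i)^`() * ((-1) ^+ (n.+1 - i) * h (n.+1 - i)%N)
     - e i * ((-1) ^+ (n - i) * h (n - i)%N))); last first.
  move=> i _; have hi : (i <= n)%N by rewrite -ltnS.
  rewrite /= derivM deriv_sign hd2 //; congr (_ + _).
  by rewrite subSn // exprS mulN1r mulNr mulrN.
rewrite sumrB rel big_ord_recl IH // mul0r add0r.
rewrite (eq_bigr (fun j : 'I_n => e j * ((-1) ^+ (n - j) * h (n - j)%N))); last first.
  by move=> j _; rewrite lift0 IH // subSS.
have E2 := rel n.
rewrite big_ord_recr /= subnn expr0 mul1r h0 mulr1 in E2.
  by rewrite -E2 opprB addrAC subrr add0r.
Qed.

Lemma appell_derivn (R : fieldType) (B : nat -> {poly R}) : appell B ->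
  forall i n, (B n)^`(i) = if (i <= n)%N then (n ^_ i)%:R *: B (n - i)%N else 0.
Proof.
case=> B0 BS; elim=> [|i IH] n; first by rewrite derivn0 subn0 ffactn0 scale1r.
rewrite derivSn; case: n => [|n].
  by rewrite B0 -polyC1 derivC derivn_poly0 ?size_poly0.
rewrite BS derivnZ IH ltnS subSS ffactSS natrM.
by case: ifP => _; [rewrite scalerA | rewrite scaler0].
Qed.

Lemma fact_nz (R : fieldType) : [pchar R] =i pred0 -> forall m, (m`!%:R : R) != 0.
Proof. by move=> ch m; rewrite ((pcharf0P R).1 ch) -lt0n fact_gt0. Qed.

Lemma prod_diag (T : comPzRingType) r (f : 'I_r -> T) :
  \prod_(j < r) f j = \det (diag_mx (\row_j f j)).
Proof. by rewrite det_diag; apply: eq_bigr => j _; rewrite mxE. Qed.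

Lemma W (R : fieldType) : [pchar R] =i pred0 -> forall (B : nat -> {poly R}), appell B ->
  forall l, wronskian (fun j : 'I_(size l) => B (wr_index l j)) =
     JT l (fun k => (k`!%:R : R)^-1 *: B k) * \prod_(j < size l) ((wr_index l j)`!)%:R.
Proof.
move=> ch B ap l.
rewrite /wronskian /JT prod_diag -det_mulmx; congr (\det _).
apply/matrixP => i j; rewrite mul_mx_diag !mxE appell_derivn //.
case: ifP => hi; last by rewrite mul0r.
rewrite [RHS]mulr_natr [RHS]scalerMnl; congr (_ *: _).
rewrite -[X in _ = X]mulr_natr -(ffact_fact hi) natrM mulrCA mulVf ?mulr1 //.
exact: fact_nz.
Qed.

Lemma det_ffact (R : comNzRingType) r (x : 'I_r -> nat) :
  \det (\matrix_(i < r, j < r) ((x j) ^_ i)%:R : 'M[R]_r) =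
  \prod_(i < r) \prod_(j < r | (i < j)%N) ((x j)%:R - (x i)%:R).
Proof.
pose P (i : nat) : {poly R} := \prod_(0 <= k < i) ('X - (k%:R)%:P).
have Pe : forall i n, (P i).[n%:R] = (n ^_ i)%:R.
  elim=> [|i IH] n; first by rewrite /P big_geq // hornerC.
  rewrite /P big_nat_recr //= hornerM -/(P i) IH hornerXsubC ffactnSr natrM.
  case: (leqP i n) => hin; first by rewrite natrB.
  by rewrite ffact_small // !mul0r.
have Pmon : forall i, P i \is monic by move=> i; apply: monic_prod_XsubC.
have Psz : forall i, size (P i) = i.+1.
  by move=> i; rewrite size_prod_XsubC size_iota subn0.
have M : \matrix_(i < r, j < r) ((x j) ^_ i)%:R =
    (\matrix_(i < r, k < r) (P i)`_k) *m Vandermonde r (\row_j ((x j)%:R : R)).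
  apply/matrixP => i j; rewrite !mxE -Pe (@horner_coef_wide _ r); last by rewrite Psz.
  by apply: eq_bigr => k _; rewrite !mxE.
rewrite M det_mulmx det_Vandermonde det_trig; last first.
  by apply/is_trig_mxP => i k hik; rewrite mxE nth_default // Psz.
rewrite big1 ?mul1r; last first.
  move=> i _; rewrite mxE.
  by have /monicP := Pmon i; rewrite lead_coefE Psz.
by apply: eq_bigr => i _; apply: eq_bigr => j _; rewrite !mxE.
Qed.

Lemma V (R : fieldType) : [pchar R] =i pred0 -> forall l,
  vandermonde (fun j : 'I_(size l) => ((wr_index l j)%:R : R)) =
  JT l (fun k => (k`!%:R : R)^-1) * \prod_(j < size l) ((wr_index l j)`!)%:R.
Proof.
move=> ch l.
rewrite /JT prod_diag -det_mulmx.
have -> : JTmx l (fun k => (k`!%:R : R)^-1) *m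
          diag_mx (\row_j ((wr_index l j)`!)%:R) =
          \matrix_(i, j) ((wr_index l j) ^_ i)%:R.
  apply/matrixP => i j; rewrite mul_mx_diag !mxE.
  case: ifP => hi; last by rewrite mul0r ffact_small // ltnNge hi.
  rewrite -(ffact_fact hi) natrM mulrCA mulVf ?mulr1 //; exact: fact_nz.
by rewrite det_ffact.
Qed.

Lemma wr_appell_JT (R : fieldType) : [pchar R] =i pred0 -> forall (B : nat -> {poly R}),
  appell B -> forall l, wr_appell B l =
    (JT l (fun k => (k`!%:R : R)^-1))^-1 *: JT l (fun k => (k`!%:R : R)^-1 *: B k).
Proof.
move=> ch B ap l.
rewrite /wr_appell (W ch ap) (V ch).
set P := \prod_(j < size l) ((wr_index l j)`!)%:R.
have -> : \prod_(j < size l) ((wr_index l j)`!)%:R = P%:P :> {poly R}.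
  by rewrite rmorph_prod; apply: eq_bigr => j _; rewrite /= polyC_natr.
have Pnz : P != 0 by apply/prodf_neq0 => j _; exact: fact_nz.
by rewrite [_ * P%:P]mulrC mul_polyC scalerA invfM -mulrA mulVf ?mulr1.
Qed.

Section Trunc.
Variables (T : comNzRingType) (N : nat).
Definition tp (u : nat -> T) : {poly T} := \poly_(i < N) u i.
Definition cong (p q : {poly T}) := forall k, (k < N)%N -> p`_k = q`_k.

Lemma coef_tpM u v k : (k < N)%N ->
  (tp u * tp v)`_k = \sum_(j < k.+1) u j * v (k - j)%N.
Proof.
move=> hk; rewrite coefM; apply: eq_bigr => j _; rewrite !coef_poly.
have hj : (j <= k)%N by rewrite -ltnS.
rewrite (leq_ltn_trans hj hk) (leq_ltn_trans (leq_subr j k) hk) //.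
Qed.

Lemma cong_mul p p' q q' : cong p p' -> cong q q' -> cong (p * q) (p' * q').
Proof.
move=> hp hq k hk; rewrite !coefM; apply: eq_bigr => j _.
have hj : (j <= k)%N by rewrite -ltnS.
by rewrite hp ?hq //; [apply: leq_ltn_trans (leq_subr j k) hk | apply: leq_ltn_trans hj hk].
Qed.
End Trunc.

Definition gX (R : fieldType) (k : nat) : {poly R} := ((k`!%:R : R)^-1)%:P * 'X^k.

Lemma partC (R : fieldType) : [pchar R] =i pred0 ->
  forall (hA eA : nat -> {poly R}) (fA fAs : nat -> R),
  relhe eA hA ->
  (forall n, hA n = \sum_(k < n.+1) (fA k)%:P * gX R (n - k)) ->
  (forall n, eA n = \sum_(k < n.+1) (fAs k)%:P * gX R (n - k)) ->
  forall n, ps_mul fAs (ps_neg_arg fA) n = ps_one R n.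
Proof.
move=> ch hA eA fA fAs rel hE eE n.
pose N := n.+1.
pose g := gX R.
have c4 : cong N (tp N g * tp N (fun k => (-1) ^+ k * g k)) 1.
  move=> k hk; rewrite coef_tpM // coef1.
  transitivity (\sum_(j < k.+1) ((j`!%:R)^-1 * ((-1) ^+ (k - j) * ((k - j)`!%:R)^-1) : R)%:P * 'X^k).
    apply: eq_bigr => j _; rewrite /g /gX !polyCM rmorph_sign.
    have hj : (j <= k)%N by rewrite -ltnS.
    have -> : 'X^k = 'X^j * 'X^(k - j) :> {poly R} by rewrite -exprD subnKC.
    ring.
  rewrite -big_distrl -rmorph_sum (rel_h0 ch k).
  by case: k {hk} => [|k] /=; rewrite ?expr0 ?mulr1 ?mul0r.
have c1 : cong N (tp N eA) (tp N (fun k => (fAs k)%:P) * tp N g).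
  by move=> k hk; rewrite coef_tpM // coef_poly hk eE.
have c2 : cong N (tp N (fun k => (-1) ^+ k * hA k))
     (tp N (fun k => ((-1) ^+ k * fA k)%:P) * tp N (fun k => (-1) ^+ k * g k)).
  move=> k hk; rewrite coef_tpM // coef_poly hk hE mulr_sumr; apply: eq_bigr => j _.
  have hj : (j <= k)%N by rewrite -ltnS.
  rewrite polyCM rmorph_sign /g.
  have -> : (-1) ^+ k = (-1) ^+ j * (-1) ^+ (k - j) :> {poly R} by rewrite -exprD subnKC.
  ring.
have c3 : cong N (tp N eA * tp N (fun k => (-1) ^+ k * hA k)) 1.
  by move=> k hk; rewrite coef_tpM // coef1 -(rel k).
have c4' : cong N 1 (tp N g * tp N (fun k => (-1) ^+ k * g k)) by move=> k hk; rewrite c4.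
have step : (tp N (fun k => (fAs k)%:P) * tp N (fun k => ((-1) ^+ k * fA k)%:P))`_n = (1 : {poly {poly R}})`_n.
  rewrite -[_ * tp N _]mulr1.
  rewrite (cong_mul (fun k _ => erefl) c4' (ltnSn n)) mulrACA.
  by rewrite -(cong_mul c1 c2 (ltnSn n)) c3.
rewrite coef_tpM // coef1 in step.
have : (ps_mul fAs (ps_neg_arg fA) n)%:P = (ps_one R n)%:P.
  rewrite /ps_mul /ps_one /ps_neg_arg polyC_natr -step rmorph_sum.
  by apply: eq_bigr => j _; rewrite /= polyCM.
exact: polyC_inj.
Qed.

Lemma JT_ext (T : pzRingType) l (h h' : nat -> T) : (forall k, h k = h' k) -> JT l h = JT l h'.
Proof. by move=> E; rewrite /JT; congr (\det _); apply/matrixP => i j; rewrite !mxE E. Qed.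

Lemma JT_single (T : comPzRingType) n (g : nat -> T) : JT [:: n] g = g n.
Proof. by rewrite /JT det_mx11 mxE /wr_index /= subn0 addn0. Qed.

Lemma conj_ones n : conj_part (ones n.+1) = [:: n.+1].
Proof. by rewrite /conj_part /ones /= /mkseq /= count_nseq /= mul1n add1n. Qed.

Lemma sorted_ones n : sorted geq (ones n).
Proof.
case: n => // n; rewrite /ones /=.
by elim: n => //= n ->; rewrite leqnn.
Qed.

Unset Implicit Arguments.
Set Strict Implicit.

Theorem theorem5p5 (R : fieldType) (charR0 : [pchar R] =i pred0)
    (A : nat -> {poly R}) :
  appell A ->
  let Astar := fun n : nat => wr_appell A (ones n) in
  [/\ appell Astar,
      (forall l : seq nat, is_partition l ->
         wr_appell Astar l = wr_appell A (conj_part l))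
    & forall fA fAstar : pseries R,
        is_appell_egf A fA -> is_appell_egf Astar fAstar ->
        ps_mul fAstar (ps_neg_arg fA) =1 ps_one R].
Proof.
move=> ap Astar.
have ch := charR0.
pose h0 := fun k => (k`!%:R : R)^-1.
pose hA := fun k => (k`!%:R : R)^-1 *: A k.
pose eA := einv hA.
have [A0 AS] := ap.
have nnz : forall n, (n.+1%:R : R) != 0 by move=> n; rewrite ((pcharf0P R).1 ch).
have h00 : h0 0%N = 1 by rewrite /h0 fact0 invr1.
have hA0 : hA 0%N = 1 by rewrite /hA A0 fact0 invr1 scale1r.
have hAd : forall n, (hA n.+1)^`() = hA n.
  move=> n; rewrite /hA derivZ AS scalerA factS natrM invfM mulrAC mulVf ?mul1r //.
have relAe : relhe hA eA := einv_rel hA0.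
have releA : relhe eA hA := rel_sym relAe.
have e0 : eA 0%N = 1 := einv0 hA.
have ed := deriv_e hA0 hAd releA e0.
have sgnz : forall k, ((-1) ^+ k : R) != 0 by move=> k; rewrite signr_eq0.
have polysign : forall k (p : {poly R}), (-1) ^+ k * p = ((-1) ^+ k : R) *: p.
  by move=> k p; rewrite -mul_polyC rmorph_sign.
have Aform : forall n, Astar n = (n`!%:R : R) *: eA n.
  case=> [|n].
    by rewrite /Astar (wr_appell_JT ch ap) /JT !det_mx00 invr1 scale1r.
  have [k Hk] := DJT (sorted_ones n.+1).
  rewrite /Astar (wr_appell_JT ch ap) -/hA (Hk _ hA eA hA0 relAe).
  rewrite -/h0 (Hk _ h0 h0 h00 (rel_h0 ch)) conj_ones !JT_single.
  by rewrite polysign scalerA invfM /h0 invrK mulrAC mulVf ?mul1r.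
have appA : appell Astar.
  split; first by rewrite Aform e0 fact0 scale1r.
  by move=> n; rewrite !Aform derivZ ed scalerA factS natrM.
split => //.
- move=> l /andP[srt _].
  have [k Hk] := DJT srt.
  rewrite (wr_appell_JT ch appA) (wr_appell_JT ch ap) -/hA -/h0.
  have -> : JT l (fun k => (k`!%:R : R)^-1 *: Astar k) = JT l eA.
    apply: JT_ext => m; rewrite Aform scalerA mulVf ?scale1r //; exact: fact_nz.
  rewrite (Hk _ eA hA e0 releA) (Hk _ h0 h0 h00 (rel_h0 ch)).
  by rewrite polysign scalerA invfM mulrAC mulVf ?mul1r.
- move=> fA fAs egfA egfAs.
  apply: (partC ch releA) => n.
    rewrite /hA egfA scalerA mulVf ?scale1r; last exact: fact_nz.
    by apply: eq_bigr => j _; rewrite /gX mulrA -polyCM mul_polyC.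
  have -> : eA n = (n`!%:R : R)^-1 *: Astar n.
    by rewrite Aform scalerA mulVf ?scale1r //; exact: fact_nz.
  rewrite egfAs scalerA mulVf ?scale1r; last exact: fact_nz.
  by apply: eq_bigr => j _; rewrite /gX mulrA -polyCM mul_polyC.
Qed.
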